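(* Let $X\sim\mathcal N(0,\Sigma)$ be an $n$-dimensional Gaussian random vector and $\rho(x)=\max\{0,x\}$ acting entrywise. Then $\mathbb E\|\rho(X)\|_2\ge\sqrt{\operatorname{tr}(\Sigma)/(2\pi)}$. *)

(* Defs.v *)
From HB Require Import structures.
From mathcomp Require Import all_boot all_order all_algebra.
From mathcomp Require Import all_classical all_reals all_analysis.
Set Implicit Arguments. Unset Strict Implicit. Unset Printing Implicit Defensive.
Import Order.TTheory GRing.Theory Num.Theory.
Local Open Scope ring_scope.
Local Open Scope classical_set_scope.

(* Centered one-dimensional Gaussian law with variance v >= 0:
   N(0,v) = normal_prob 0 (sqrt v) if v > 0, and the Dirac mass at 0 if v = 0
   (the library's normal_prob with s = 0 is NOT the degenerate Gaussian). *)
Definition gauss1 {R : realType} (v : R) : set R -> \bar R :=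
  if v == 0 then @dirac _ R (0 : R) R else normal_prob 0 (Num.sqrt v).

Definition is_gaussian_vector {d} {T : measurableType d} {R : realType} {n : nat}
    (P : probability T R) (X : T -> 'cV[R]_n) (Sigma : 'M[R]_n) : Prop :=
  (forall i : 'I_n, measurable_fun setT (fun t => X t i ord0)) /\
  forall (u : 'cV[R]_n) (B : set R), measurable B ->
    P ((fun t => (u^T *m X t) ord0 ord0) @^-1` B) = gauss1 ((u^T *m Sigma *m u) ord0 ord0) B.

Definition relu {R : realType} (x : R) : R := Num.max 0 x.
Definition norm2 {R : realType} {n : nat} (x : 'cV[R]_n) : R :=
  Num.sqrt (\sum_(i < n) (x i ord0) ^+ 2).
Definition relu_vec {R : realType} {n : nat} (x : 'cV[R]_n) : 'cV[R]_n :=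
  map_mx relu x.

(* Main.v *)
Require Import Defs.
From HB Require Import structures.
From mathcomp Require Import all_boot all_order all_algebra.
From mathcomp Require Import all_classical all_reals all_analysis.
From mathcomp Require Import measurable_realfun normal_distribution ring lra.
Import Order.TTheory GRing.Theory Num.Theory.
Local Open Scope ring_scope.

Section Helpers.
Import numFieldTopology.Exports numFieldNormedType.Exports.
Local Open Scope classical_set_scope.

Lemma cs_sum (R : realFieldType) n (a b : 'I_n -> R) :
  (\sum_i a i * b i)^+2 <= (\sum_i a i ^+2) * (\sum_i b i ^+2).
Proof.
have H : 0 <= \sum_i \sum_j (a i * b j - a j * b i)^+2.
  by apply: sumr_ge0 => i _; apply: sumr_ge0 => j _; exact: sqr_ge0.
have E1 : (\sum_i a i ^+2) * (\sum_i b i ^+2) = \sum_i \sum_j (a i ^+2 * b j ^+2).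
  by rewrite mulr_suml; apply: eq_bigr => i _; rewrite mulr_sumr.
have E2 : (\sum_i a i * b i)^+2 = \sum_i \sum_j ((a i * b i) * (a j * b j)).
  by rewrite expr2 mulr_suml; apply: eq_bigr => i _; rewrite mulr_sumr.
have E3 : \sum_i \sum_j (a i * b j - a j * b i)^+2 =
   \sum_i \sum_j (a i ^+2 * b j ^+2) + \sum_i \sum_j (a j ^+2 * b i ^+2)
   - (\sum_i \sum_j ((a i * b i) * (a j * b j))) *+ 2.
  transitivity (\sum_i \sum_j (a i ^+2 * b j ^+2 + a j ^+2 * b i ^+2
      - ((a i * b i) * (a j * b j)) *+ 2)).
    by apply: eq_bigr => i _; apply: eq_bigr => j _; ring.
  under eq_bigr do rewrite sumrB big_split /= sumrMnl.
  by rewrite sumrB big_split /= sumrMnl.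
have E4 : \sum_i \sum_j (a j ^+2 * b i ^+2) = \sum_i \sum_j (a i ^+2 * b j ^+2).
  by rewrite exchange_big.
rewrite E3 E4 -E1 -E2 in H.
rewrite -subr_ge0; lra.
Qed.

Lemma delta_quad (R : pzRingType) n m (A : 'M[R]_(n, m)) i j :
  ((delta_mx i (ord0 : 'I_1))^T *m A *m delta_mx j (ord0 : 'I_1)) ord0 ord0 = A i j.
Proof. by rewrite trmx_delta -rowE -colE !mxE. Qed.

Lemma delta_lin (R : pzRingType) n (x : 'cV[R]_n) i :
  ((delta_mx i (ord0 : 'I_1))^T *m x) ord0 ord0 = x i ord0.
Proof. by rewrite trmx_delta -rowE !mxE. Qed.
Section density.
Local Open Scope ereal_scope.
Context d (T : measurableType d) (R : realType) (mu nu : {measure set T -> \bar R}).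
Variable g : T -> R.
Hypothesis mg : measurable_fun setT g.
Hypothesis g0 : forall x, (0 <= g x)%R.
Hypothesis hnu : forall A, measurable A -> nu A = \int[mu]_(x in A) (g x)%:E.

Let dens_indic E : measurable E ->
  \int[nu]_x (\1_E x)%:E = \int[mu]_x ((\1_E x)%:E * (g x)%:E).
Proof.
move=> mE; rewrite integral_indic// setIT hnu// integral_mkcond.
apply: eq_integral => x _; rewrite patchE indicE.
by case: ifPn => xE /=; rewrite ?mul1e ?mul0e.
Qed.

Import HBNNSimple.

Let dens_nnsfun (f : {nnsfun T >-> R}) :
  \int[nu]_x (f x)%:E = \int[mu]_x ((f x)%:E * (g x)%:E).
Proof.
under [LHS]eq_integral do rewrite fimfunE -fsumEFin//.
rewrite [LHS]ge0_integral_fsum//; last 2 first.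
  - by move=> r; exact/measurable_EFinP/measurableT_comp.
  - by move=> n x _; rewrite EFinM nnfun_muleindic_ge0.
under [RHS]eq_integral.
  move=> x xD; rewrite fimfunE -fsumEFin// ge0_mule_fsuml; last first.
    by move=> r; rewrite EFinM nnfun_muleindic_ge0.
  over.
rewrite [RHS]ge0_integral_fsum//; last 2 first.
  - move=> r; apply/measurable_EFinP => /=.
    apply: measurable_funM; last exact: mg.
    exact: measurableT_comp.
  - move=> n x _; rewrite mule_ge0//; last by rewrite lee_fin.
    by rewrite EFinM nnfun_muleindic_ge0.
apply: eq_fsbigr => r /[!inE] -[t _ <-].
rewrite integralZl_indic_nnsfun//= dens_indic//.
rewrite -ge0_integralZl//.
- by apply: eq_integral => x _; rewrite EFinM muleA.
- apply: emeasurable_funM; first exact/measurable_EFinP/measurable_indic.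
  exact/measurable_EFinP.
- by move=> x _; rewrite mule_ge0// lee_fin.
- by rewrite lee_fin.
Qed.

Lemma integral_density (f : T -> \bar R) :
  measurable_fun setT f -> (forall x, 0 <= f x) ->
  \int[nu]_x f x = \int[mu]_x (f x * (g x)%:E).
Proof.
move=> mf f0.
pose f_ := nnsfun_approx measurableT mf.
transitivity (limn (fun n => \int[nu]_x (f_ n x)%:E)).
  rewrite -monotone_convergence//=.
  - apply: eq_integral => ? /[!inE] xD; apply/esym/cvg_lim => //=.
    exact: cvg_nnsfun_approx.
  - by move=> n; exact/measurable_EFinP/measurable_funTS.
  - by move=> n ? _; rewrite lee_fin.
  - by move=> ? _ ? ? mn; rewrite lee_fin; exact/lefP/nd_nnsfun_approx.
transitivity (limn (fun n => \int[mu]_x ((f_ n x)%:E * (g x)%:E))).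
  by congr (limn _); apply/funext => n; exact: dens_nnsfun.
rewrite -monotone_convergence//=.
- apply: eq_integral => x _; apply/cvg_lim => //=.
  rewrite (muleC (f x)).
  under eq_fun do rewrite muleC.
  apply: cvgeZl => //.
  exact: cvg_nnsfun_approx.
- move=> n; apply/measurable_EFinP => /=.
  by apply: measurable_funM => //; exact: measurable_funTS.
- by move=> n x _; rewrite mule_ge0// lee_fin.
- move=> x _ a b ab; rewrite lee_wpmul2r ?lee_fin//.
  exact/lefP/nd_nnsfun_approx.
Qed.

End density.
Lemma dU (R : realType) (k x : R) :
  is_derive x 1 (fun y : R => - (y ^+ 2) / k) (- (x *+ 2) / k).
Proof.
  have h := @is_deriveX R R id 2 x 1 1 (is_derive_id x 1).
  have h2 := @is_deriveN R R R _ x 1 _ h.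
  have h3 := @is_deriveM R _ _ (cst k^-1) x 1 _ _ h2 (is_derive_cst _ _ _).
  have -> : (fun y : R => - (y ^+ 2) / k) = (- id ^+ 2) * cst k^-1 by apply/funext => y.
  move: h3; rewrite scaler0 add0r expr1.
  congr is_derive; rewrite -[LHS]/(k^-1 * - ((2 * x) * 1)).
  by rewrite mulr1 mulrC mulNr mulr_natl mulNr.
Qed.

Lemma dF (R : realType) (k c x : R) :
  is_derive x 1 (fun y : R => c * expR (- (y ^+ 2) / k))
     (c * (expR (- (x ^+ 2) / k) * (- (x *+ 2) / k))).
Proof.
have du := @dU R k x.
have h := is_derive1_comp (is_derive_expR _) du.
have h2 := @is_deriveM R _ (cst c) _ x 1 _ _ (is_derive_cst _ _ _) h.
move: h2; congr is_derive.
rewrite /cst scaler0 addr0 /=.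
by rewrite -[LHS]/(c * (expR (- x ^+ 2 / k) * (- (x *+ 2) / k))).
Qed.

Lemma relu_gauss (R : realType) (s : R) : 0 < s ->
  (\int[lebesgue_measure]_x ((relu x)%:E * (normal_pdf 0 s x)%:E) =
   (s / Num.sqrt (pi *+ 2))%:E)%E.
Proof.
move=> s0; have s0' : s != 0 by rewrite gt_eqF.
set k := s ^+ 2 *+ 2.
have k0 : 0 < k by rewrite pmulrn_rgt0 // exprn_gt0.
pose f : R -> R := fun x => x * expR (- (x ^+ 2) / k).
pose F : R -> R := fun x => (- s ^+ 2) * expR (- (x ^+ 2) / k).
have dF' (x : R) : is_derive x 1 F (f x).
  apply: (is_derive_eq (@dF R k (- s ^+ 2) x)).
  rewrite /f /k; field; exact: s0'.
have cF : continuous F.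
  move=> x; exact/differentiable_continuous/derivable1_diffP/ex_derive.
have cu : continuous (fun y : R => - (y ^+ 2) / k).
  move=> x; have h := @dU R k x.
  exact/differentiable_continuous/derivable1_diffP/ex_derive.
have cf : continuous f.
  move=> x; apply: cvgM; first exact: cvg_id.
  apply: continuous_comp; [exact: cu | exact: continuous_expR].
have Fy : F x @[x --> +oo%R] --> (0 : R).
  have h1 : (x ^+ 2 / k) @[x --> +oo%R] --> +oo%R.
    by apply: gt0_cvgMly; [rewrite invr_gt0|exact: cvgr_expr2].
  have h2 : expR (- (x ^+ 2 / k)) @[x --> +oo%R] --> (0 : R).
    by apply: (cvg_comp (fun x : R => x ^+ 2 / k) (fun x => expR (- x))); [exact: h1|exact: cvgr_expR].
  have h3 := cvgM (cvg_cst (- s ^+ 2)) h2.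
  rewrite mulr0 in h3.
  have -> : F = (fun x => - s ^+ 2 * expR (- (x ^+ 2 / k))).
    by apply: funext => x; rewrite /F; congr (_ * expR _); rewrite mulNr.
  apply: h3.
have hI : (\int[lebesgue_measure]_(x in `[0%R, +oo[) (f x)%:E = (s ^+ 2)%:E)%E.
  rewrite (@ge0_continuous_FTC2y R f F 0 0).
  - rewrite -EFinB; congr (_%:E).
    by rewrite /F expr0n /= oppr0 mul0r expR0 mulr1 sub0r opprK.
  - by move=> x x0; rewrite /f mulr_ge0 // expR_ge0.
  - exact: continuous_subspaceT.
  - exact: Fy.
  - by move=> x _; exact: ex_derive.
  - by apply: cvg_at_right_filter; exact: cF.
  - by move=> x _; rewrite derive1E; exact: derive_val.
transitivity (\int[lebesgue_measure]_(x in `[0%R, +oo[) (normal_peak s * f x)%:E)%E.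
  rewrite [RHS]integral_mkcond; apply: eq_integral => x _; rewrite patchE.
  case: ifPn => xin.
    have x0 : 0 <= x by move: xin; rewrite inE /= in_itv /= andbT.
    rewrite /relu (max_idPr x0) /normal_pdf (negbTE s0') /=.
    by rewrite /f /normal_fun subr0 -EFinM /k; congr EFin; ring.
  have x0 : x < 0.
    by move: xin; rewrite notin_setE /= in_itv /= andbT => /negP; rewrite -ltNge.
  by rewrite /relu (max_idPl (ltW x0)) mul0e.
under eq_integral do rewrite EFinM.
rewrite ge0_integralZl//; last 3 first.
- apply/measurable_EFinP; apply: measurable_funTS.
  exact: continuous_measurable_fun.
- by move=> x /=; rewrite in_itv /= andbT => x0; rewrite lee_fin /f mulr_ge0 // expR_ge0.
- by rewrite lee_fin normal_peak_ge0.
rewrite hI -EFinM; congr EFin.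
have q0 : 0 < Num.sqrt (pi *+ 2 : R) by rewrite sqrtr_gt0 pmulrn_rgt0 // pi_gt0.
rewrite /normal_peak -mulrnAr sqrtrM ?sqr_ge0 // sqrtr_sqr ger0_norm ?ltW //.
by field; rewrite s0' andbT gt_eqF.
Qed.

Lemma relu_ge0 (R : realType) (x : R) : 0 <= relu x.
Proof. by rewrite /relu le_max lexx. Qed.

Lemma measurable_relu (R : realType) : measurable_fun setT (@relu R).
Proof.
have := measurable_maxr (measurable_cst (0:R)) (@measurable_id _ R setT).
by [].
Qed.

Lemma coord_moment d (T : measurableType d) (R : realType) (P : probability T R)
    (Y : T -> R) (v : R) :
  measurable_fun setT Y -> 0 <= v ->
  (forall B, measurable B -> P (Y @^-1` B) = gauss1 v B) ->
  ((Num.sqrt v / Num.sqrt (pi *+ 2))%:E <= \int[P]_t (relu (Y t))%:E)%E.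
Proof.
move=> mY v0 hY.
have [->|vn0] := eqVneq v 0.
  rewrite sqrtr0 mul0r; apply: integral_ge0 => t _.
  by rewrite lee_fin relu_ge0.
have s0 : 0 < Num.sqrt v by rewrite sqrtr_gt0 lt_def vn0 v0.
rewrite -(@relu_gauss R _ s0) le_eqVlt; apply/orP; left; apply/eqP.
have mY' : measurable_fun setT (Y : T -> measurableTypeR R) by exact: mY.
have hp := ge0_integral_pushforward mY' P (D := setT) (f := fun y => (relu y)%:E) measurableT.
rewrite preimage_setT in hp.
rewrite -hp; last 2 first.
- by apply: measurableT_comp => //; exact: measurable_relu.
- by move=> y _; rewrite lee_fin relu_ge0.
apply/esym.
transitivity (\int[normal_prob 0 (Num.sqrt v)]_y (relu y)%:E)%E.
  apply: eq_measure_integral.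
  by move=> A mA _; rewrite -[LHS]/(P (Y @^-1` A)) (hY A mA) /gauss1 (negbTE vn0).
apply: (@integral_density _ (measurableTypeR R) R lebesgue_measure (normal_prob 0 (Num.sqrt v))
  (normal_pdf 0 (Num.sqrt v))).
- exact: measurable_normal_pdf.
- by move=> x; exact: normal_pdf_ge0.
- by [].
- by apply: measurableT_comp => //; exact: measurable_relu.
- by move=> y; rewrite lee_fin relu_ge0.
Qed.

Lemma pointwise (R : realType) n (w : 'I_n -> R) (x : 'cV[R]_n) :
  \sum_i w i * relu (x i ord0) <= Num.sqrt (\sum_i w i ^+ 2) * norm2 (relu_vec x).
Proof.
rewrite /norm2 -sqrtrM; last by apply: sumr_ge0 => i _; exact: sqr_ge0.
under [X in _ <= Num.sqrt (_ * X)]eq_bigr do rewrite /relu_vec mxE.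
apply: (le_trans (ler_norm _)); rewrite -sqrtr_sqr; apply: ler_wsqrtr.
exact: cs_sum.
Qed.

Lemma main_aux (d : measure_display) (T : measurableType d) (R : realType)
    (P : probability T R) (n : nat) (Sigma : 'M[R]_n) (X : T -> 'cV[R]_n) :
  Sigma^T = Sigma ->
  (forall u : 'cV[R]_n, 0 <= (u^T *m Sigma *m u) ord0 ord0) ->
  is_gaussian_vector P X Sigma ->
  ((Num.sqrt (\tr Sigma / (pi *+ 2)))%:E
     <= \int[P]_t (norm2 (relu_vec (X t)))%:E)%E.
Proof.
move=> _ Hpsd [Hm Hl].
pose v i := Sigma i i.
have v0 i : 0 <= v i by have := Hpsd (delta_mx i ord0); rewrite delta_quad.
have mom i : ((Num.sqrt (v i) / Num.sqrt (pi *+ 2))%:E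
    <= \int[P]_t (relu (X t i ord0))%:E)%E.
  apply: (@coord_moment d T R P (fun t => X t i ord0) (v i) (Hm i) (v0 i)).
  move=> B mB; have := Hl (delta_mx i ord0) B mB.
  rewrite delta_quad => <-; congr (P _).
  by apply/seteqP; split => t /=; rewrite delta_lin.
have trE : \tr Sigma = \sum_i v i by [].
have tr0 : 0 <= \tr Sigma by rewrite trE; apply: sumr_ge0 => i _.
set c := Num.sqrt (pi *+ 2 : R).
have pi0 : 0 < (pi *+ 2 : R) by rewrite pmulrn_rgt0 // pi_gt0.
have c0 : 0 < c by rewrite sqrtr_gt0.
have lhsE : Num.sqrt (\tr Sigma / (pi *+ 2)) = Num.sqrt (\tr Sigma) / c.
  by rewrite sqrtrM // sqrtrV // ltW.
have mY i : measurable_fun setT (fun t => relu (X t i ord0)).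
  exact: (measurableT_comp (measurable_relu R) (Hm i)).
have mN : measurable_fun setT (fun t => norm2 (relu_vec (X t))).
  apply: (measurableT_comp (continuous_measurable_fun (@sqrt_continuous R))).
  apply: measurable_sum => i.
  have -> : (fun t => (relu_vec (X t) i ord0) ^+ 2) = (fun t => (relu (X t i ord0)) ^+ 2).
    by apply/funext => t; rewrite /relu_vec mxE.
  exact: (measurable_funM (mY i) (mY i)).
have N0 t : 0 <= norm2 (relu_vec (X t)) by exact: sqrtr_ge0.
rewrite lhsE.
have [tr_eq0|trn0] := eqVneq (\tr Sigma) 0.
  rewrite tr_eq0 sqrtr0 mul0r; apply: integral_ge0 => t _.
  by rewrite lee_fin.
set w := Num.sqrt (\tr Sigma).
have w0 : 0 < w by rewrite sqrtr_gt0 lt_def trn0 tr0.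
rewrite -(@lee_pmul2l _ w%:E) ?lte_fin //.
rewrite -ge0_integralZl //; last 3 first.
- exact/measurable_EFinP.
- by move=> t _; rewrite lee_fin.
- by rewrite lee_fin ltW.
have step : (w%:E * (w / c)%:E =
    \sum_i ((Num.sqrt (v i))%:E * (Num.sqrt (v i) / c)%:E))%E.
  under eq_bigr do rewrite -EFinM.
  rewrite sumEFin -EFinM; congr EFin.
  rewrite mulrA -expr2 sqr_sqrtr // trE mulr_suml; apply: eq_bigr => i _.
  by rewrite mulrA -expr2 sqr_sqrtr.
rewrite step.
apply: le_trans.
  apply: lee_sum => i _; apply: lee_wpmul2l; last exact: mom.
  by rewrite lee_fin sqrtr_ge0.
have -> : (\sum_i (Num.sqrt (v i))%:E * \int[P]_t (relu (X t i ord0))%:E =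
    \int[P]_t \sum_i (Num.sqrt (v i) * relu (X t i ord0))%:E)%E.
  rewrite ge0_integral_sum //; try (by move=> i; apply/measurable_EFinP; apply: measurable_funM);
    try (by move=> i t _; rewrite lee_fin mulr_ge0 // ?sqrtr_ge0 ?relu_ge0).
  apply: eq_bigr => i _; rewrite -ge0_integralZl //.
  - by apply/measurable_EFinP.
  - by move=> t _; rewrite lee_fin relu_ge0.
apply: ge0_le_integral => //.
- by move=> t _; apply: sume_ge0 => i _; rewrite lee_fin mulr_ge0 // ?sqrtr_ge0 ?relu_ge0.
- under eq_fun do rewrite sumEFin.
  apply/measurable_EFinP; apply: measurable_sum => i.
  by apply: measurable_funM => //.
- by apply/measurable_EFinP; apply: measurable_funM => //.
move=> t _; rewrite sumEFin -EFinM lee_fin.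
have -> : w = Num.sqrt (\sum_i Num.sqrt (v i) ^+ 2).
  by rewrite /w trE; congr Num.sqrt; apply: eq_bigr => i _; rewrite sqr_sqrtr.
exact: pointwise.
Qed.

End Helpers.

Theorem mainTheorem15 (d : measure_display) (T : measurableType d) (R : realType)
    (P : probability T R) (n : nat) (Sigma : 'M[R]_n) (X : T -> 'cV[R]_n) :
  Sigma^T = Sigma ->
  (forall u : 'cV[R]_n, 0 <= (u^T *m Sigma *m u) ord0 ord0) ->
  is_gaussian_vector P X Sigma ->
  ((Num.sqrt (\tr Sigma / (pi *+ 2)))%:E
     <= \int[P]_t (norm2 (relu_vec (X t)))%:E)%E.
Proof. exact: main_aux. Qed.
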